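(* Let $n\ge 3$ and let $\mathcal{A}$ be an arrangement of $(n-2)$-planes in $\mathbb{P}^n$ whose incidence graph $\Gamma(\mathcal{A})$ is isomorphic to the complete bipartite graph $K_{a,b}$ with $2 \le a \le b$. Then $\bigcap_{X\in\mathcal{A}} X$ is an $(n-4)$-dimensional linear subspace of $\mathbb{P}^n$.
   Context: A subspace arrangement is a finite collection of linear subspaces of $\mathbb{P}^n$ with no inclusions among distinct members. The incidence graph $\Gamma(\mathcal{A})$ has vertex set $\mathcal{A}$ and an edge between $X\ne Y$ iff $\dim(X\cap Y)$ exceeds the expected dimension, which for two $(n-2)$-planes in $\mathbb{P}^n$ is $n-4$ (the empty set has dimension $-1$; for $n=3$ an $(n-4)$-plane means the empty set). $K_{a,b}$ is the complete bipartite graph with parts of sizes $a$ and $b$. *)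

(* Defs.v *)
(* Projective space P^n over a field F is modelled by the
   vector space F^(n+1) = 'rV[F]_(n.+1); a projective linear subspace is a
   vector subspace U, of projective dimension \dim U - 1 (the zero subspace,
   i.e. the empty set, has projective dimension -1). *)
From HB Require Import structures.
From mathcomp Require Import all_boot all_order all_algebra.
Set Implicit Arguments. Unset Strict Implicit. Unset Printing Implicit Defensive.
Import GRing.Theory Num.Theory.
Local Open Scope ring_scope.

Definition pdim (F : fieldType) (n : nat) (U : {vspace 'rV[F]_(n.+1)}) : int :=
  (\dim U)%:Z - 1.

Definition is_kplane (F : fieldType) (n : nat) (k : int)
  (U : {vspace 'rV[F]_(n.+1)}) : bool := pdim U == k.

Definition expected_dim (F : fieldType) (n : nat)
  (X Y : {vspace 'rV[F]_(n.+1)}) : int := pdim X + pdim Y - n%:Z.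

Definition incident (F : fieldType) (n : nat)
  (X Y : {vspace 'rV[F]_(n.+1)}) : bool :=
  (X != Y) && (expected_dim X Y < pdim (X :&: Y)%VS).

Definition is_arrangement (F : fieldType) (n : nat) (I : finType)
  (A : I -> {vspace 'rV[F]_(n.+1)}) : Prop :=
  forall i j : I, i != j -> ~~ (A i <= A j)%VS.

Definition Kab_adj (a b : nat) (u v : 'I_a + 'I_b) : bool :=
  match u, v with
  | inl _, inr _ | inr _, inl _ => true
  | _, _ => false
  end.

Definition incidence_graph_iso_Kab (F : fieldType) (n : nat) (I : finType)
  (A : I -> {vspace 'rV[F]_(n.+1)}) (a b : nat) : Prop :=
  exists phi : I -> 'I_a + 'I_b, bijective phi /\
    forall i j : I, incident (A i) (A j) = Kab_adj (phi i) (phi j).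

(* Main.v *)
Require Import Defs.
From HB Require Import structures.
From mathcomp Require Import all_boot all_order all_algebra.
From mathcomp Require Import zify.
Import GRing.Theory Num.Theory.
Local Open Scope ring_scope.

Lemma key_sub (F : fieldType) (vT : vectType F) (X1 X2 Y : {vspace vT}) (d : nat) :
  \dim X1 = d -> \dim X2 = d -> \dim Y = d ->
  (d.-1 <= \dim (X1 :&: Y))%N -> (d.-1 <= \dim (X2 :&: Y))%N ->
  (\dim (X1 :&: X2) <= d.-2)%N -> (X1 :&: X2 <= Y)%VS.
Proof.
move=> h1 h2 hY c1 c2 c12.
set M := ((X1 :&: Y) :&: (X2 :&: Y))%VS.
have hs := dimv_sum_cap (X1 :&: Y) (X2 :&: Y).
have hsub : (X1 :&: Y + X2 :&: Y <= Y)%VS by rewrite subv_add !capvSr.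
have := dimvS hsub; rewrite hY => hle.
have hML : (M <= X1 :&: X2)%VS by apply: capvS; apply: capvSl.
have : M == (X1 :&: X2)%VS.
  rewrite eqEdim hML /=. rewrite -/M in hs. lia.
move/eqP=> <-. by apply: subv_trans (capvSr _ _) (capvSr _ _).
Qed.

Lemma inc_iff (F : fieldType) (n : nat) (X Y : {vspace 'rV[F]_(n.+1)}) :
  (3 <= n)%N -> \dim X = n.-1 -> \dim Y = n.-1 ->
  incident X Y = (X != Y) && (n.-2 <= \dim (X :&: Y))%N.
Proof.
move=> hn hX hY; rewrite /incident /expected_dim /pdim hX hY; congr andb.
apply/idP/idP; lia.
Qed.

Lemma cap_lb (F : fieldType) (n : nat) (X Y : {vspace 'rV[F]_(n.+1)}) :
  (3 <= n)%N -> \dim X = n.-1 -> \dim Y = n.-1 -> (n - 3 <= \dim (X :&: Y))%N.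
Proof.
move=> hn hX hY; have hs := dimv_sum_cap X Y.
have := dimvS (subvf (X + Y)); rewrite dimvf /dim /= mul1n => h.
lia.
Qed.

Theorem lemma2p1 (F : fieldType) (n : nat) (I : finType)
  (A : I -> {vspace 'rV[F]_(n.+1)}) (a b : nat) :
  (3 <= n)%N ->
  is_arrangement A ->
  (forall i : I, is_kplane (n%:Z - 2) (A i)) ->
  (2 <= a)%N -> (a <= b)%N ->
  incidence_graph_iso_Kab A a b ->
  pdim (\bigcap_(i : I) A i)%VS = n%:Z - 4.
Proof.
move=> hn harr hk ha hab [phi [[g hpg hgp] hinc]].
have hd : forall i, \dim (A i) = n.-1.
  move=> i; move: (hk i); rewrite /is_kplane /pdim => /eqP; lia.
have hne : forall i j, phi i != phi j -> A i != A j.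
  move=> i j hij; apply/negP => /eqP e.
  have : i != j by apply: contra hij => /eqP ->.
  by move/harr; rewrite e subvv.
have inc : forall i j, Kab_adj (phi i) (phi j) = (A i != A j) && (n.-2 <= \dim (A i :&: A j))%N.
  by move=> i j; rewrite -hinc inc_iff.
have adj : forall i j, Kab_adj (phi i) (phi j) -> (n.-2 <= \dim (A i :&: A j))%N.
  by move=> i j; rewrite inc => /andP[].
have nadj : forall i j, phi i != phi j -> ~~ Kab_adj (phi i) (phi j) ->
    (\dim (A i :&: A j) <= n - 3)%N.
  move=> i j hij; rewrite inc hne //= -ltnNge; lia.
pose x1 := g (inl (Ordinal (ltnW ha))).
pose x2 := g (inl (Ordinal ha)).
have hb : (1 < b)%N by lia.
pose y1 := g (inr (Ordinal (ltnW hb))).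
pose y2 := g (inr (Ordinal hb)).
pose L := (A x1 :&: A x2)%VS.
have px1 : phi x1 = inl (Ordinal (ltnW ha)) by rewrite hgp.
have px2 : phi x2 = inl (Ordinal ha) by rewrite hgp.
have py1 : phi y1 = inr (Ordinal (ltnW hb)) by rewrite hgp.
have py2 : phi y2 = inr (Ordinal hb) by rewrite hgp.
have dL : (\dim L <= n - 3)%N by apply: nadj; rewrite px1 px2.
have dL' : (n - 3 <= \dim L)%N by apply: cap_lb.
have K : forall u v w, phi u != phi v -> ~~ Kab_adj (phi u) (phi v) ->
    Kab_adj (phi u) (phi w) -> Kab_adj (phi v) (phi w) ->
    (A u :&: A v <= A w)%VS.
  move=> u v w huv nuv auw avw.
  apply: (@key_sub _ _ _ _ _ n.-1); rewrite ?hd //.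
  - by have := adj _ _ auw; lia.
  - by have := adj _ _ avw; lia.
  - by have := nadj _ _ huv nuv; lia.
have LY : forall w, (exists k, phi w = inr k) -> (L <= A w)%VS.
  move=> w [k hw]; apply: K; by rewrite ?px1 ?px2 ?hw.
pose L' := (A y1 :&: A y2)%VS.
have LX' : forall w, (exists k, phi w = inl k) -> (L' <= A w)%VS.
  move=> w [k hw]; apply: K; by rewrite ?py1 ?py2 ?hw.
have eLL : L' = L.
  apply/eqP; rewrite eqEdim subv_cap !LX'; try by rewrite ?px1 ?px2; eexists.
  have : (n - 3 <= \dim L')%N by apply: cap_lb.
  move=> h /=; lia.
have Lall : forall i, (L <= A i)%VS.
  move=> i; have [[k e]|[k e]] : (exists k, phi i = inl k) \/ (exists k, phi i = inr k).
  - by case: (phi i) => k; [left|right]; exists k.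
  - by rewrite -eLL; apply: LX'; exists k.
  - by apply: LY; exists k.
have eq : (\bigcap_(i : I) A i)%VS = L.
  apply/eqP; rewrite eqEdim; apply/andP; split.
    rewrite subv_cap; apply/andP; split; [apply: (@bigcapv_inf _ _ _ x1) | apply: (@bigcapv_inf _ _ _ x2)] =>//; rewrite /L ?capvSl ?capvSr.
  by apply: dimvS; apply/subv_bigcapP => i _; apply: Lall.
rewrite /pdim eq; lia.
Qed.
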